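(* Let $H_\alpha=-\Delta_\alpha+V$ be the Schrödinger operator with a periodic magnetic potential $\alpha$ and a periodic electric potential $V$ on a periodic graph $\mathcal G$, with $V$ normalized so that $\min_{x\in\mathcal V_*}V_x=\varkappa_+$, and let $n\in\mathbb N$. Then the total bandwidth of $H_\alpha^n$ satisfies $$\mathfrak S(H_\alpha^n)\le n(\operatorname{diam}V+\varkappa_+)^{n-1}\mathfrak S(H_\alpha),$$ $$\mathfrak S(H_\alpha^n)\ge\big|\operatorname{Tr}H_\alpha^n(k_1)-\operatorname{Tr}H_\alpha^n(k_2)\big|\qquad\text{for all }k_1,k_2\in\mathbb T^d.$$
   Context: Let $\Gamma\subset\mathbb R^d$ be a lattice with basis $\mathfrak a_1,\dots,\mathfrak a_d$ and fundamental cell $\Omega=\{\sum_sx_s\mathfrak a_s:(x_s)\in[0,1)^d\}$. Let $\mathcal G=(\mathcal V,\mathcal E)$ be a connected, locally finite, infinite graph embedded in $\mathbb R^d$ (loops, multiple edges allowed), invariant under $\Gamma$-translations, with finite quotient $\mathcal G_*=(\mathcal V_*,\mathcal E_* )$; $\nu=\#\mathcal V_*$. Oriented edges $\mathcal A,\mathcal A_*$; $\underline{\mathbf e}$ inverse; $\varkappa_x$ = number of oriented edges starting at $x$; $\varkappa_+=\max_{\mathcal V_*}\varkappa_x$; $\operatorname{diam}V=\max_{\mathcal V_*}V-\min_{\mathcal V_*}V$. Edge index: $x=x_0+[x]$, $x_0\in\mathcal V\cap\Omega$, $[x]\in\Gamma$ with coordinates $[x]_{\mathbb A}\in\mathbb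 Z^d$; $\tau((x,y))=[y]_{\mathbb A}-[x]_{\mathbb A}$, defined on $\mathcal A_*$. Periodic magnetic potential $\alpha:\mathcal A\to\mathbb R$ ($\alpha(\underline{\mathbf e})=-\alpha(\mathbf e)$, $\Gamma$-invariant); $V$ real $\Gamma$-periodic. $H_\alpha=-\Delta_\alpha+V$, $\Delta_\alpha=\varkappa-A_\alpha$, $(A_\alpha f)_x=\sum_{\mathbf e=(x,y)\in\mathcal A}e^{i\alpha(\mathbf e)}f_y$. Fiber operators $H_\alpha(k)=A_\alpha(k)-\varkappa+V$ on $\mathbb C^\nu$, $(A_\alpha(k)f)_x=\sum_{\mathbf e=(x,y)\in\mathcal A_*}e^{i(\alpha(\mathbf e)+\langle\tau(\mathbf e),k\rangle)}f_y$, $k\in\mathbb T^d=\mathbb R^d/(2\pi\mathbb Z)^d$, eigenvalues $\lambda_{\alpha,1}(k)\le\dots\le\lambda_{\alpha,\nu}(k)$. Bands $\sigma_j(H_\alpha)=\lambda_{\alpha,j}(\mathbb T^d)$ and $\sigma_j(H_\alpha^n)=\{\lambda_{\alpha,j}(k)^n:k\in\mathbb T^d\}$ (so $|\sigma_j(H_\alpha^n)|=\max_k\lambda_{\alpha,j}^n(k)-\min_k\lambda_{\alpha,j}^n(k)$); $\mathfrak S(H_\alpha^n)=\sum_{j=1}^\nu|\sigma_j(H_\alpha^n)|$. *)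

(* Defs.v *)
From HB Require Import structures.
From Stdlib Require Import Relations.
From mathcomp Require Import all_boot all_order all_algebra.
From mathcomp Require Import all_classical all_reals all_analysis.
From mathcomp Require Import complex.
Set Implicit Arguments. Unset Strict Implicit. Unset Printing Implicit Defensive.
Import Order.TTheory GRing.Theory Num.Theory.
Local Open Scope ring_scope.
Local Open Scope complex_scope.

(* Quotient graph data of a Z^d-periodic graph:
   vertices 'I_nu, finite set E of oriented edges of the quotient,
   src/tgt, edge inversion inv, edge index tau : E -> Z^d. *)

(* vertices of the periodic graph G: (x0, [x]) with x0 : 'I_nu, [x] in Z^d *)
Definition lift_adj (nu d : nat) (E : finType) (src tgt : E -> 'I_nu)
  (tau : E -> 'I_d -> int) (u v : 'I_nu * ('I_d -> int)) : Prop :=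
  exists e : E, [/\ src e = u.1, tgt e = v.1 & forall s, v.2 s = u.2 s + tau e s].

Definition periodic_graph_connected (nu d : nat) (E : finType)
  (src tgt : E -> 'I_nu) (tau : E -> 'I_d -> int) : Prop :=
  forall u v, clos_refl_trans _ (lift_adj src tgt tau) u v.

Definition kappa (nu : nat) (E : finType) (src : E -> 'I_nu) (x : 'I_nu) : nat :=
  #|[set e | src e == x]|.

Definition kappa_plus (nu : nat) (E : finType) (src : E -> 'I_nu) : nat :=
  \max_(x : 'I_nu) kappa src x.

Definition expi (R : realType) (t : R) : R[i] := cos t +i* sin t.

Definition fiberH (R : realType) (nu d : nat) (E : finType)
  (src tgt : E -> 'I_nu) (tau : E -> 'I_d -> int) (alpha : E -> R)
  (V : 'I_nu -> R) (k : 'I_d -> R) : 'M[R[i]]_nu :=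
  \matrix_(x, y)
     ((\sum_(e : E | (src e == x) && (tgt e == y))
          expi (alpha e + \sum_(s < d) (tau e s)%:~R * k s))
      + ((V x - (kappa src x)%:R)%:C) *+ (x == y)).

(* lam k : 'I_nu -> R is the nondecreasing list of eigenvalues
   (with multiplicity) of the Hermitian matrix M k *)
Definition is_sorted_eigenvalues (R : realType) (nu : nat)
  (M : 'M[R[i]]_nu) (lam : 'I_nu -> R) : Prop :=
  (forall i j : 'I_nu, (i <= j)%N -> lam i <= lam j) /\
  char_poly M = \prod_(j < nu) ('X - ((lam j)%:C)%:P).

Definition band_length (R : realType) (nu d : nat)
  (lam : ('I_d -> R) -> 'I_nu -> R) (n : nat) (j : 'I_nu) : R :=
  sup (range (fun k => lam k j ^+ n)) - inf (range (fun k => lam k j ^+ n)).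

Definition total_bandwidth (R : realType) (nu d : nat)
  (lam : ('I_d -> R) -> 'I_nu -> R) (n : nat) : R :=
  \sum_(j < nu) band_length lam n j.

Definition diamV (R : realType) (nu : nat) (V : 'I_nu -> R) : R :=
  sup (range V) - inf (range V).

(* Main.v *)
Require Import Defs.
From Stdlib Require Import Relations.
From mathcomp Require Import all_boot all_order all_algebra.
From mathcomp Require Import all_classical all_reals all_analysis.
From mathcomp Require Import complex.
From mathcomp Require Import ring lra.
Import Order.TTheory GRing.Theory Num.Theory.
Local Open Scope ring_scope.
Local Open Scope complex_scope.
Set Implicit Arguments. Unset Strict Implicit. Unset Printing Implicit Defensive.

Lemma trig_mul (F : comNzRingType) n (A B : 'M[F]_n) :
  is_trig_mx A -> is_trig_mx B ->
  is_trig_mx (A *m B) /\ forall i, (A *m B) i i = A i i * B i i.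
Proof.
move=> /is_trig_mxP hA /is_trig_mxP hB; split.
  apply/is_trig_mxP => i j ij; rewrite mxE; apply: big1 => k _.
  case: (ltnP i k) => ik; first by rewrite hA // mul0r.
  by rewrite hB ?mulr0 //; apply: leq_ltn_trans ij.
move=> i; rewrite mxE (bigD1 i) //= big1 ?addr0 // => k ki.
case: (ltngtP i k) => ik; first by rewrite hA // mul0r.
  by rewrite hB ?mulr0.
by move: ki; rewrite (val_inj ik) eqxx.
Qed.

Lemma trig_pow (F : comNzRingType) n (A : 'M[F]_n) m :
  is_trig_mx A -> is_trig_mx (A ^+ m) /\ forall i, (A ^+ m) i i = A i i ^+ m.
Proof.
move=> hA; elim: m => [|m [h1 h2]].
  split; first by rewrite expr0; apply/is_trig_mxP => i j ij; rewrite mxE; case: eqP => // e; move: ij; rewrite e ltnn.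
  by move=> i; rewrite expr0 mxE eqxx.
have [t1 t2] := trig_mul hA h1.
by rewrite exprS -mulmxE; split => // i; rewrite t2 h2 exprS.
Qed.

Lemma char_poly_conj (F : fieldType) n (P A : 'M[F]_n) : P \in unitmx ->
  char_poly (P *m A *m invmx P) = char_poly A.
Proof.
move=> Pu; rewrite /char_poly /char_poly_mx.
set Q := map_mx polyC P; set Qi := map_mx polyC (invmx P).
have QQi : Q *m Qi = 1%:M by rewrite -map_mxM mulmxV // map_mx1.
have QiQ : Qi *m Q = 1%:M by rewrite -map_mxM mulVmx // map_mx1.
have -> : 'X%:M - map_mx polyC (P *m A *m invmx P)
   = Q *m ('X%:M - map_mx polyC A) *m Qi.
  rewrite !map_mxM -/Q -/Qi mulmxBr mulmxBl mul_mx_scalar -scalemxAl QQi.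
  by rewrite scalemx1.
rewrite !det_mulmx mulrC mulrA -det_mulmx QiQ det1 mul1r //.
Qed.

Lemma tr_pow_eig (C : numClosedFieldType) n (A : 'M[C]_n) (l : 'I_n -> C) m :
  char_poly A = \prod_(j < n) ('X - (l j)%:P) -> \tr (A ^+ m) = \sum_j l j ^+ m.
Proof.
case: n A l => [|n] A l h; first by rewrite /mxtrace !big_ord0.
have [P Pu Pt] := Schur A (ltn0Sn n).
have Pi : P \in unitmx by apply: unitarymx_unit.
rewrite /similar_to /= conjumx // in Pt.
set T := P *m A *m invmx P in Pt.
have Tm : forall k, T ^+ k = P *m A ^+ k *m invmx P.
  elim=> [|k IH]; first by rewrite !expr0 mulmx1 mulmxV.
  rewrite exprS IH exprS -!mulmxE /T !mulmxA mulmxKV //.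
have -> : \tr (A ^+ m) = \tr (T ^+ m).
  by rewrite Tm mxtrace_mulC mulmxA mulVmx // mul1mx.
have [_ Td] := trig_pow m Pt.
rewrite /mxtrace; under eq_bigr do rewrite Td.
have hp : perm_eq [seq T i i | i <- index_enum 'I_n.+1] [seq l i | i <- index_enum 'I_n.+1].
  apply: prod_XsubC_eq; rewrite !big_map -char_poly_trig // -h.
  exact: char_poly_conj.
rewrite -(big_map (fun i => T i i) predT (fun x => x ^+ m)).
by rewrite (perm_big _ hp) big_map.
Qed.

Section Bands.
Variable R : realType.
Local Open Scope classical_set_scope.

Lemma rg_ub (T : Type) (g : T -> R) B : (forall k, `|g k| <= B) ->
  has_ubound (range g).
Proof. by move=> hB; exists B => _ [k _ <-]; have /ler_normlP[] := hB k. Qed.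

Lemma rg_lb (T : Type) (g : T -> R) B : (forall k, `|g k| <= B) ->
  has_lbound (range g).
Proof.
by move=> hB; exists (- B) => _ [k _ <-]; have /ler_normlP[] := hB k; rewrite lerNl.
Qed.

Lemma band_ge (T : Type) (g : T -> R) B : (forall k, `|g k| <= B) ->
  forall k1 k2, g k1 - g k2 <= sup (range g) - inf (range g).
Proof.
move=> hB k1 k2; apply: lerB.
  by have := ub_le_sup (rg_ub hB); apply; exists k1.
by have := ge_inf (rg_lb hB); apply; exists k2.
Qed.

Lemma band_le (T : Type) (g : T -> R) (t0 : T) c :
  (forall k1 k2, g k1 - g k2 <= c) -> sup (range g) - inf (range g) <= c.
Proof.
move=> hc; rewrite lerBlDr.
apply: ge_sup; first by exists (g t0), t0.
move=> _ [k1 _ <-]; rewrite -lerBlDl.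
apply: lb_le_inf; first by exists (g t0), t0.
by move=> _ [k2 _ <-]; rewrite lerBlDl addrC -lerBlDl.
Qed.
End Bands.

Lemma pow_diff (R : realFieldType) (x y M : R) n : `|x| <= M -> `|y| <= M ->
  `|x ^+ n - y ^+ n| <= n%:R * M ^+ n.-1 * `|x - y|.
Proof.
move=> hx hy; have M0 : 0 <= M by apply: le_trans hx.
rewrite subrXX normrM mulrC ler_wpM2r //.
apply: le_trans (ler_norm_sum _ _ _) _.
apply: (@le_trans _ _ (\sum_(i < n) M ^+ n.-1)); last first.
  by rewrite sumr_const card_ord mulr_natl.
apply: ler_sum => i _; rewrite normrM !normrX.
have -> : M ^+ n.-1 = M ^+ (n.-1 - i) * M ^+ i.
  by rewrite -exprD subnK //; case: i => i /=; case: (n) => //.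
apply: ler_pM; rewrite ?exprn_ge0 //; apply: lerXn2r;
  by rewrite // qualifE /=.
Qed.

Lemma count_in (C : pzSemiRingType) nu (E : finType) (src tgt : E -> 'I_nu) (inv : E -> E) y :
  (forall e, inv (inv e) = e) -> (forall e, tgt (inv e) = src e) ->
  \sum_(x : 'I_nu) \sum_(e | (src e == x) && (tgt e == y)) (1 : C) = (kappa src y)%:R.
Proof.
move=> hinv htgt.
transitivity (\sum_(e | tgt e == y) (1 : C)).
  rewrite (partition_big src predT) //=; apply: eq_bigr => x _.
  by apply: eq_bigl => e; rewrite andbC.
rewrite (reindex_inj (can_inj hinv)) /=.
rewrite /kappa -sum1_card natr_sum; apply: eq_big => // e.
by rewrite htgt inE.
Qed.

Lemma norm_realC (R : rcfType) (a : R) : `|a%:C| = `|a|%:C.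
Proof. by rewrite normc_def /= expr0n /= addr0 sqrtr_sqr. Qed.

Lemma norm_expi (R : realType) (t : R) : `|expi t| = 1.
Proof. by rewrite normc_def /= cos2Dsin2 sqrtr1. Qed.

Lemma eig_bound (R : realType) (nu d : nat) (E : finType)
  (src tgt : E -> 'I_nu) (inv : E -> E) (tau : E -> 'I_d -> int)
  (alpha : E -> R) (V : 'I_nu -> R) (k : 'I_d -> R) (l : R) :
  (forall e, inv (inv e) = e) -> (forall e, tgt (inv e) = src e) ->
  root (char_poly (fiberH src tgt tau alpha V k)) l%:C ->
  exists y, `|l - (V y - (kappa src y)%:R)| <= (kappa src y)%:R.
Proof.
move=> hinv htgt; rewrite -eigenvalue_root_char => /eigenvalueP [v hv v0].
set M := fiberH src tgt tau alpha V k in hv.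
case: (pickP (fun i => v 0 i != 0)) => [i0 vi0 | h]; last first.
  by case/eqP: v0; apply/rowP => i; rewrite mxE; move: (h i) => /negbFE/eqP.
set nv := fun i => complex.Re `|v 0 i|.
have nvE : forall i, `|v 0 i| = (nv i)%:C by move=> i; rewrite RRe_real ?normr_real.
case: (arg_maxP nv (isT : predT i0)) => y _ ymax.
exists y.
set S := fun x => \sum_(e : E | (src e == x) && (tgt e == y))
          expi (alpha e + \sum_(s < d) (tau e s)%:~R * k s).
set c := (V y - (kappa src y)%:R).
have heq : v 0 y * (l%:C - c%:C) = \sum_x v 0 x * S x.
  move/rowP: (hv) => /(_ y); rewrite !mxE /=.
  under eq_bigr do rewrite /M mxE mulrDr.
  rewrite big_split /=.
  have -> : \sum_x v 0 x * ((V x - (kappa src x)%:R)%:C *+ (x == y))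
      = v 0 y * c%:C.
    rewrite (bigD1 y) //= eqxx mulr1n big1 ?addr0 // => x /negbTE ->.
    by rewrite mulr0n mulr0.
  by move=> h; rewrite mulrBr [v 0 y * l%:C]mulrC -h addrK.
have vy0 : 0 < `|v 0 y|.
  rewrite normr_gt0; apply: contraTneq vi0 => vy.
  have h : `|v 0 i0| <= `|v 0 y| by rewrite !nvE lecR; exact: ymax.
  by rewrite negbK -normr_le0 (le_trans h) // vy normr0.
have hS : \sum_x `|S x| <= (kappa src y)%:R.
  rewrite -(count_in R[i] _ hinv htgt); apply: ler_sum => x _.
  apply: le_trans (ler_norm_sum _ _ _) _.
  by under eq_bigr do rewrite norm_expi.
have key : `|v 0 y| * `|l%:C - c%:C| <= `|v 0 y| * (kappa src y)%:R.
  rewrite -normrM heq; apply: le_trans (ler_norm_sum _ _ _) _.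
  apply: (@le_trans _ _ (\sum_x `|v 0 y| * `|S x|)); last first.
    by rewrite -mulr_sumr ler_wpM2l.
  apply: ler_sum => x _; rewrite normrM ler_wpM2r // !nvE lecR; exact: ymax.
rewrite ler_pM2l // in key.
by rewrite -lecR -norm_realC rmorphB /= rmorph_nat.
Qed.

Unset Implicit Arguments.
Set Strict Implicit.

Theorem lemma4p2 (R : realType) (nu d : nat) (E : finType)
  (src tgt : E -> 'I_nu) (inv : E -> E) (tau : E -> 'I_d -> int)
  (alpha : E -> R) (V : 'I_nu -> R)
  (lam : ('I_d -> R) -> 'I_nu -> R) (n : nat) :
  (0 < d)%N ->
  (forall e, inv (inv e) = e) ->
  (forall e, src (inv e) = tgt e) ->
  (forall e, tgt (inv e) = src e) ->
  (forall e s, tau (inv e) s = - tau e s) ->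
  (forall e, alpha (inv e) = - alpha e) ->
  periodic_graph_connected src tgt tau ->
  (forall x, (kappa_plus src)%:R <= V x) ->
  (exists x, V x = (kappa_plus src)%:R) ->
  (forall k, is_sorted_eigenvalues (fiberH src tgt tau alpha V k) (lam k)) ->
  total_bandwidth lam n
    <= n%:R * (diamV V + (kappa_plus src)%:R) ^+ n.-1 * total_bandwidth lam 1
  /\
  (forall k1 k2 : 'I_d -> R,
     `| \tr (fiberH src tgt tau alpha V k1 ^+ n)
        - \tr (fiberH src tgt tau alpha V k2 ^+ n) |
       <= (total_bandwidth lam n)%:C).
Proof.
move=> _ hinv _ htgt _ _ _ hVge [x0 hx0] hlam.
set kp : R := (kappa_plus src)%:R.
set M := sup (range V).
have VB : forall x, `|V x| <= \sum_i `|V i|.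
  by move=> x; rewrite (bigD1 x) //= lerDl sumr_ge0.
have VleM : forall x, V x <= M.
  by move=> x; have := ub_le_sup (rg_ub VB); apply; exists x.
have infV : inf (range V) = kp.
  apply/le_anti/andP; split.
    by rewrite /kp -hx0; have := ge_inf (rg_lb VB); apply; exists x0.
  by apply: lb_le_inf; [exists (V x0), x0 | move=> _ [x _ <-]; apply: hVge].
have hMdef : diamV V + kp = M by rewrite /diamV infV subrK.
have kp0 : 0 <= kp by rewrite /kp ler0n.
have kpM : kp <= M by rewrite /kp -hx0.
have M0 : 0 <= M by apply: le_trans kpM.
have hb : forall k j, `|lam k j| <= M.
  move=> k j.
  have hr : root (char_poly (fiberH src tgt tau alpha V k)) (lam k j)%:C.
    rewrite /root (hlam k).2 horner_prod (bigD1 j) //= hornerXsubC subrr mul0r.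
    by [].
  have [y hy] := eig_bound hinv htgt hr.
  have ky : (kappa src y)%:R <= kp by rewrite /kp ler_nat /kappa_plus (leq_bigmax y).
  have k0 : 0 <= (kappa src y)%:R :> R by rewrite ler0n.
  have := VleM y; have := hVge y; move: hy; rewrite -/kp.
  move: ((kappa src y)%:R) ky k0 => K ky k0.
  rewrite !ler_norml => /andP[h1 h2] h3 h4; apply/andP; split; lra.
split.
  rewrite hMdef /total_bandwidth mulr_sumr; apply: ler_sum => j _.
  rewrite /band_length; apply: (band_le (fun _ => 0)) => k1 k2.
  apply: le_trans (ler_norm _) _; apply: le_trans (pow_diff n (hb k1 j) (hb k2 j)) _.
  apply: ler_wpM2l; first by rewrite mulr_ge0 ?ler0n ?exprn_ge0.
  have hb1 : forall k, `|lam k j ^+ 1| <= M by move=> k; rewrite expr1.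
  have g1 := band_ge hb1 k1 k2; have g2 := band_ge hb1 k2 k1.
  rewrite !expr1 in g1 g2.
  by rewrite ler_norml g1 andbT lerNl opprB.
move=> k1 k2.
rewrite (tr_pow_eig n (hlam k1).2) (tr_pow_eig n (hlam k2).2) -sumrB.
apply: le_trans (ler_norm_sum _ _ _) _.
rewrite /total_bandwidth rmorph_sum; apply: ler_sum => j _.
rewrite -!rmorphXn -rmorphB norm_realC lecR.
have hbn : forall k, `|lam k j ^+ n| <= M ^+ n.
  by move=> k; rewrite normrX lerXn2r // qualifE /= ?normr_ge0.
have g1 := band_ge hbn k1 k2; have g2 := band_ge hbn k2 k1.
by rewrite ler_norml g1 andbT lerNl opprB.
Qed.
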